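(* Let $\mathfrak{k}$ be a field, $n\ge2$, $r_1,\dots,r_n$ positive integers, and ${\mathcal A}=(x_{i_1\ldots i_n})_{1\le i_j\le r_j}$ a box-shaped matrix of distinct indeterminates with polynomial ring $\mathfrak{k}[{\mathcal A}]$. For $l=1,\dots,n$ let $I_l=I_2({\mathcal A}_l)\mathfrak{k}[{\mathcal A}]+(x_{i_1\ldots i_n}: i_l=r_l)$, where ${\mathcal A}_l$ is the sub-box-shaped matrix of entries with $i_l<r_l$. Then $\bigcap_{l=1}^n I_l=I_2({\mathcal A})+(x_{r_1\ldots r_n})$.
   Context: $\mathfrak{k}$ is algebraically closed of characteristic $0$. The $2\times2$ minors of a box-shaped matrix $(a_{i_1\ldots i_n})$ are the elements $a_{i_1\ldots i_l\ldots i_n}a_{j_1\ldots j_l\ldots j_n}-a_{i_1\ldots i_{l-1}j_li_{l+1}\ldots i_n}a_{j_1\ldots j_{l-1}i_lj_{l+1}\ldots j_n}$ for any coordinate $l$ and any two index points; $I_2(\cdot)$ denotes the ideal they generate. *)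

(* Defs.v *)
From HB Require Import structures.
From mathcomp Require Import all_boot all_order all_algebra.
From mathcomp Require Import mpoly.
Set Implicit Arguments. Unset Strict Implicit. Unset Printing Implicit Defensive.
Import GRing.Theory.
Local Open Scope ring_scope.

(* Index points of an n-dimensional box r_1 x ... x r_n, 0-indexed:
   a point is a function p : 'I_n -> nat with p j < r j. *)
Definition boxM (n : nat) (r : 'I_n -> nat) : nat := (\max_(j < n) r j)%N.

Definition box (n : nat) (r : 'I_n -> nat) : predArgType :=
  {p : {ffun 'I_n -> 'I_(boxM r)} | [forall j, (p j < r j)%N]}.

Definition coord n (r : 'I_n -> nat) (p : box r) (j : 'I_n) : nat := val p j.

Definition swapc n (r : 'I_n -> nat) (l : 'I_n) (a b : box r) : box r :=
  insubd a [ffun j => if j == l then val b j else val a j].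

Definition polyA (k : fieldType) n (r : 'I_n -> nat) := {mpoly k[#|box r|]}.

Definition xA (k : fieldType) n (r : 'I_n -> nat) (p : box r) : polyA k r :=
  'X_(enum_rank p).

Definition minor2 (k : fieldType) n (r : 'I_n -> nat) (l : 'I_n) (a b : box r)
  : polyA k r :=
  xA k a * xA k b - xA k (swapc l a b) * xA k (swapc l b a).

Definition ideal_gen (R : comNzRingType) (S : R -> Prop) (x : R) : Prop :=
  exists s : seq (R * R),
    (forall q, q \in s -> S q.2) /\ x = \sum_(q <- s) q.1 * q.2.

Definition gens_J (k : fieldType) n (r : 'I_n -> nat) (f : polyA k r) : Prop :=
  (exists l a b, f = minor2 k l a b) \/
  (exists p : box r, (forall j, coord p j = (r j).-1) /\ f = xA k p).

(* generators of I_l = I_2(A_l) k[A] + (x_{i_1...i_n} : i_l = r_l), where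
   A_l is the sub-box of entries with i_l < r_l (0-indexed: i_l < r_l - 1) *)
Definition gens_I (k : fieldType) n (r : 'I_n -> nat) (l : 'I_n) (f : polyA k r)
  : Prop :=
  (exists l' a b, (coord a l < (r l).-1)%N /\ (coord b l < (r l).-1)%N /\
                  f = minor2 k l' a b) \/
  (exists p : box r, coord p l = (r l).-1 /\ f = xA k p).

(* Main.v *)
Require Import Defs.
From HB Require Import structures.
From mathcomp Require Import all_boot all_order all_algebra.
From mathcomp Require Import mpoly.
Set Implicit Arguments. Unset Strict Implicit. Unset Printing Implicit Defensive.
Import GRing.Theory.
Local Open Scope ring_scope.

Section IdealGen.
Variable R : comNzRingType.
Implicit Types S T : R -> Prop.

Lemma ig0 S : ideal_gen S 0.
Proof. by exists [::]; rewrite big_nil. Qed.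

Lemma ig_gen S x : S x -> ideal_gen S x.
Proof.
by move=> Sx; exists [:: (1, x)]; split; [move=> q; rewrite inE => /eqP -> | rewrite big_seq1 mul1r].
Qed.

Lemma igD S x y : ideal_gen S x -> ideal_gen S y -> ideal_gen S (x + y).
Proof.
move=> [s [Hs ->]] [t [Ht ->]]; exists (s ++ t); split; last by rewrite big_cat.
by move=> q; rewrite mem_cat => /orP[/Hs|/Ht].
Qed.

Lemma igMl S c x : ideal_gen S x -> ideal_gen S (c * x).
Proof.
move=> [s [Hs ->]]; exists [seq (c * q.1, q.2) | q <- s]; split.
  by move=> q /mapP[q' /Hs ? ->].
by rewrite big_map mulr_sumr; apply: eq_bigr => q _; rewrite mulrA.
Qed.

Lemma igMr S c x : ideal_gen S x -> ideal_gen S (x * c).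
Proof. by rewrite mulrC; apply: igMl. Qed.

Lemma igN S x : ideal_gen S x -> ideal_gen S (- x).
Proof. by move=> h; rewrite -mulN1r; apply: igMl. Qed.

Lemma igB S x y : ideal_gen S x -> ideal_gen S y -> ideal_gen S (x - y).
Proof. by move=> hx hy; apply: igD => //; apply: igN. Qed.

Lemma ig_mono S T x : (forall y, S y -> ideal_gen T y) -> ideal_gen S x -> ideal_gen T x.
Proof.
move=> ST [s [Hs ->]]; elim: s Hs => [|q s IH] Hs; first by rewrite big_nil; apply: ig0.
rewrite big_cons; apply: igD; first by apply: igMl; apply: ST; apply: Hs; rewrite mem_head.
by apply: IH => q' q's; apply: Hs; rewrite inE q's orbT.
Qed.

Lemma ig_sum S (I : Type) (s : seq I) (F : I -> R) :
  (forall i, ideal_gen S (F i)) -> ideal_gen S (\sum_(i <- s) F i).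
Proof.
move=> H; elim: s => [|i s IH]; first by rewrite big_nil; apply: ig0.
by rewrite big_cons; apply: igD.
Qed.

End IdealGen.

Section Box.
Variables (k : fieldType) (n : nat) (r : 'I_n -> nat).

Local Notation M := (boxM r).
Local Notation B := (box r).
Definition crd (l : 'I_n) (p : B) : 'I_M := val p l.

Lemma crd_lt (p : B) l : (crd l p < r l)%N.
Proof. by have /forallP := valP p; apply. Qed.

Lemma swapc_crd l a b j : crd j (swapc l a b) = if j == l then crd j b else crd j a.
Proof.
rewrite /crd /swapc insubdK ?ffunE //.
apply/forallP => i; rewrite ffunE; case: ifP => _; exact: crd_lt.
Qed.

Lemma coordE (p : B) l : Defs.coord p l = crd l p.
Proof. by []. Qed.

Lemma lastP (p : B) l : ~~ (Defs.coord p l < (r l).-1)%N -> Defs.coord p l = (r l).-1.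
Proof.
move=> h; have := crd_lt p l; rewrite coordE in h *; move: h.
case: (r l) => //= m; rewrite -leqNgt => h1 h2; apply/eqP; rewrite eqn_leq h1 andbT -ltnS //.
Qed.

Local Notation inI l := (ideal_gen (@gens_I k n r l)).
Local Notation inJ := (ideal_gen (@gens_J k n r)).

Lemma minor_in_I l l' a b : inI l (minor2 k l' a b).
Proof.
have [ha|ha] := boolP (Defs.coord a l < (r l).-1)%N;
have [hb|hb] := boolP (Defs.coord b l < (r l).-1)%N.
- by apply: ig_gen; left; exists l', a, b.
- have hb' := lastP hb.
  have gb : inI l (xA k b) by apply: ig_gen; right; exists b.
  have gc : inI l (xA k (swapc l' a b) * xA k (swapc l' b a)).
    have [e|ne] := eqVneq l l'.
      apply: igMr; apply: ig_gen; right; exists (swapc l' a b); split => //.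
      by rewrite coordE swapc_crd e eqxx -e -coordE.
    apply: igMl; apply: ig_gen; right; exists (swapc l' b a); split => //.
    by rewrite coordE swapc_crd (negbTE ne) -coordE.
  by apply: igB => //; apply: igMl.
- have ha' := lastP ha.
  have ga : inI l (xA k a) by apply: ig_gen; right; exists a.
  have gc : inI l (xA k (swapc l' a b) * xA k (swapc l' b a)).
    have [e|ne] := eqVneq l l'.
      apply: igMl; apply: ig_gen; right; exists (swapc l' b a); split => //.
      by rewrite coordE swapc_crd e eqxx -e -coordE.
    apply: igMr; apply: ig_gen; right; exists (swapc l' a b); split => //.
    by rewrite coordE swapc_crd (negbTE ne) -coordE.
  by apply: igB => //; apply: igMr.
- have ha' := lastP ha.
  have ga : inI l (xA k a) by apply: ig_gen; right; exists a.
  have gc : inI l (xA k (swapc l' a b) * xA k (swapc l' b a)).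
    have [e|ne] := eqVneq l l'.
      apply: igMl; apply: ig_gen; right; exists (swapc l' b a); split => //.
      by rewrite coordE swapc_crd e eqxx -e -coordE.
    apply: igMr; apply: ig_gen; right; exists (swapc l' a b); split => //.
    by rewrite coordE swapc_crd (negbTE ne) -coordE.
  by apply: igB => //; apply: igMr.
Qed.

Lemma J_sub_I l f : inJ f -> inI l f.
Proof.
apply: ig_mono => y [[l' [a [b ->]]]|[p [hp ->]]]; first exact: minor_in_I.
by apply: ig_gen; right; exists p.
Qed.

End Box.

Section Segre.
Variables (k : fieldType) (n : nat) (r : 'I_n -> nat).

Local Notation M := (boxM r).
Local Notation B := (box r).
Local Notation K := #|{: 'I_n * 'I_M}|.
Local Notation Y := {mpoly k[K]}.

Definition yv (l : 'I_n) (v : 'I_M) : 'I_K := enum_rank (l, v).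

Definition sigp (p : B) : 'X_{1..K} := \big[+%MM/0%MM]_(l < n) U_(yv l (crd l p))%MM.

Lemma sigpE p l v : sigp p (yv l v) = (crd l p == v) :> nat.
Proof.
rewrite /sigp mnm_sumE (bigD1 l) //= big1 ?addn0.
  by rewrite mnm1E /yv (inj_eq enum_rank_inj) xpair_eqE eqxx.
by move=> j nj; rewrite mnm1E /yv (inj_eq enum_rank_inj) xpair_eqE (negbTE nj).
Qed.

Definition hY (i : 'I_#|B|) : Y := 'X_[sigp (enum_val i)].
Definition phi (f : polyA k r) : Y := mmap (@mpolyC K k) hY f.

Lemma phiM f g : phi (f * g) = phi f * phi g.
Proof. exact: (rmorphM (mmap (@mpolyC K k : {rmorphism k -> Y}) hY)). Qed.
Lemma phiB f g : phi (f - g) = phi f - phi g.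
Proof. exact: (rmorphB (mmap (@mpolyC K k : {rmorphism k -> Y}) hY)). Qed.
Lemma phiD f g : phi (f + g) = phi f + phi g.
Proof. exact: (rmorphD (mmap (@mpolyC K k : {rmorphism k -> Y}) hY)). Qed.
Lemma phi1 : phi 1 = 1.
Proof. exact: (rmorph1 (mmap (@mpolyC K k : {rmorphism k -> Y}) hY)). Qed.

Lemma phi_xA p : phi (xA k p) = 'X_[sigp p].
Proof. by rewrite /phi /xA mmapX mmap1U /hY enum_rankK. Qed.

Lemma sigp_swap l a b :
  (sigp a + sigp b = sigp (swapc l a b) + sigp (swapc l b a))%MM.
Proof.
apply/mnmP => i; rewrite !mnmDE /sigp !mnm_sumE -!big_split /=.
apply: eq_bigr => j _; rewrite !swapc_crd; case: (j == l) => //; exact: addnC.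
Qed.

Lemma phi_minor l a b : phi (minor2 k l a b) = 0.
Proof.
by rewrite /minor2 phiB !phiM !phi_xA -!mpolyXD (sigp_swap l) subrr.
Qed.

Lemma coefMX0 (g : Y) (u s : 'X_{1..K}) i : (0 < u i)%N -> s i = 0%N -> (g * 'X_[u])@_s = 0.
Proof.
move=> hu hs; rewrite {1}(mpolyE g) mulr_suml raddf_sum /=; apply: big1 => m _.
rewrite -scalerAl -mpolyXD mcoeffZ mcoeffX.
suff /negbTE -> : (m + u)%MM != s by rewrite mulr0.
apply/eqP => e; move: hs; rewrite -e mnmDE => /eqP; rewrite addn_eq0 => /andP[_ /eqP].
by move=> h; rewrite h in hu.
Qed.

Lemma coef_vanish l f (s : 'X_{1..K}) : ideal_gen (@gens_I k n r l) f ->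
  (forall v : 'I_M, val v = (r l).-1 -> s (yv l v) = 0%N) -> (phi f)@_s = 0.
Proof.
move=> [t [Ht ->]] hs.
have -> : phi (\sum_(q <- t) q.1 * q.2) = \sum_(q <- t) phi (q.1 * q.2).
  elim: t {Ht} => [|q t IH]; first by rewrite !big_nil; exact: (rmorph0 (mmap (@mpolyC K k : {rmorphism k -> Y}) hY)).
  by rewrite !big_cons phiD IH.
rewrite (raddf_sum (mcoeff s)) /=; apply: big1_seq => q /andP[_ qt].
case: (Ht q qt) => [[l' [a [b [_ [_ ->]]]]]|[p [hp ->]]].
  by rewrite phiM phi_minor mulr0 mcoeff0.
rewrite phiM phi_xA; apply: (@coefMX0 _ _ _ (yv l (crd l p))).
  by rewrite sigpE eqxx.
by apply: hs; rewrite -hp.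
Qed.

End Segre.

Section Comb.
Variables (k : fieldType) (n : nat) (r : 'I_n -> nat).

Local Notation M := (boxM r).
Local Notation B := (box r).
Local Notation inJ := (ideal_gen (@gens_J k n r)).

Definition XP (P : seq B) : polyA k r := \prod_(p <- P) xA k p.
Definition marg (P Q : seq B) := forall l, perm_eq (map (crd l) P) (map (crd l) Q).

Lemma marg_trans P Q R : marg P Q -> marg Q R -> marg P R.
Proof. by move=> h1 h2 l; apply: perm_trans (h1 l) (h2 l). Qed.

Lemma marg_perm P Q : perm_eq P Q -> marg P Q.
Proof. by move=> h l; apply: perm_map. Qed.

Lemma marg_swap l a b R :
  marg (a :: b :: R) (swapc l a b :: swapc l b a :: R).
Proof.
move=> j /=; rewrite !swapc_crd; case: (j == l); last by [].
by apply/permP => pr /=; rewrite addnCA.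
Qed.

Lemma XP_swap l a b R :
  XP (a :: b :: R) - XP (swapc l a b :: swapc l b a :: R) = minor2 k l a b * XP R.
Proof. by rewrite /XP !big_cons /minor2 !mulrA mulrBl. Qed.

Lemma XP_perm P Q : perm_eq P Q -> XP P = XP Q.
Proof. exact: perm_big. Qed.

Lemma mem_rem_neq (T : eqType) (x y : T) s : x != y -> x \in s -> x \in rem y s.
Proof.
move=> nxy xs; rewrite -has_pred1 has_count count_mem_rem.
have -> : (y == x) = false by apply/negbTE; rewrite eq_sym.
by rewrite subn0 -has_count has_pred1.
Qed.

Lemma gather_aux q P : P != [::] -> (forall l, crd l q \in map (crd l) P) ->
  forall j, (j <= n)%N -> exists P' p0, [/\ marg P P', inJ (XP P - XP P'), p0 \in P' &
    forall l : 'I_n, (l < j)%N -> crd l p0 = crd l q].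
Proof.
move=> hP hq; elim => [|j IH] hj.
  exists P, (head q P); split => //.
  - by rewrite subrr; apply: ig0.
  - by case: P hP {hq} => //= a P' _; rewrite mem_head.
have [P' [p0 [hm hJ hp0 hag]]] := IH (ltnW hj).
pose lj := Ordinal hj.
have [e|ne] := eqVneq (crd lj p0) (crd lj q).
  exists P', p0; split => // l; rewrite ltnS leq_eqVlt => /orP[/eqP el|]; last exact: hag.
  by have -> : l = lj by apply: val_inj.
have : crd lj q \in map (crd lj) P' by rewrite -(perm_mem (hm lj)); apply: hq.
case/mapP => p1 hp1 e1.
have np : p1 != p0 by apply: contraNneq ne => e2; rewrite e1 e2.
pose R := rem p1 (rem p0 P').
have hperm : perm_eq P' (p0 :: p1 :: R).
  apply: perm_trans (perm_to_rem hp0) _; rewrite perm_cons.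
  by apply: perm_to_rem; apply: mem_rem_neq.
exists (swapc lj p0 p1 :: swapc lj p1 p0 :: R), (swapc lj p0 p1); split.
- apply: marg_trans hm _; apply: marg_trans (marg_perm hperm) _; exact: marg_swap.
- have -> : XP P - XP (swapc lj p0 p1 :: swapc lj p1 p0 :: R) =
     (XP P - XP P') + (XP (p0 :: p1 :: R) - XP (swapc lj p0 p1 :: swapc lj p1 p0 :: R)).
    by rewrite (XP_perm hperm) addrA subrK.
  apply: igD => //; rewrite XP_swap; apply: igMr; apply: ig_gen; left; by exists lj, p0, p1.
- by rewrite mem_head.
- move=> l hl; rewrite swapc_crd; case: eqP => [->|nl]; first by rewrite -e1.
  apply: hag; move: hl; rewrite ltnS leq_eqVlt => /orP[/eqP el|//].
  by case: nl; apply: val_inj.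
Qed.

Lemma gather q P : P != [::] -> (forall l, crd l q \in map (crd l) P) ->
  exists P', [/\ marg P P', inJ (XP P - XP P') & q \in P'].
Proof.
move=> hP hq; have [P' [p0 [hm hJ hp0 hag]]] := gather_aux hP hq (leqnn n).
exists P'; split => //.
suff <- : p0 = q by [].
by apply: val_inj; apply/ffunP => l; apply: (hag l (ltn_ord l)).
Qed.

Lemma comb_main (l0 : 'I_n) Q P : marg P Q -> inJ (XP P - XP Q).
Proof.
elim: Q P => [|q Q IH] P hm.
  have := perm_size (hm l0); rewrite size_map /= => /eqP; rewrite size_eq0 => /eqP ->.
  by rewrite subrr; apply: ig0.
have hP : P != [::].
  by have := perm_size (hm l0); rewrite size_map /=; case: P {hm}.
have hq : forall l, crd l q \in map (crd l) P.
  by move=> l; rewrite (perm_mem (hm l)) /= mem_head.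
have [P' [hm' hJ hqP]] := gather hP hq.
pose R := rem q P'.
have hperm := perm_to_rem hqP.
have hmR : marg R Q.
  move=> l; rewrite -(perm_cons (crd l q)).
  have := hm l; rewrite /= => h.
  apply: perm_trans _ h; rewrite perm_sym.
  apply: perm_trans (hm' l) _.
  exact: (perm_map (crd l) hperm).
have -> : XP P - XP (q :: Q) = (XP P - XP P') + xA k q * (XP R - XP Q).
  by rewrite (XP_perm hperm) /XP !big_cons mulrBr addrA subrK.
by apply: igD => //; apply: igMl; apply: IH.
Qed.

End Comb.

Lemma regroup (I J : eqType) (V : zmodType) (t : seq I) (g : I -> J) (P : pred J) (F : I -> V) :
  \sum_(i <- t | P (g i)) F i =
  \sum_(j <- undup (map g t) | P j) \sum_(i <- t | g i == j) F i.
Proof.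
set u := undup (map g t).
transitivity (\sum_(i <- t) \sum_(j <- u | P j && (g i == j)) F i).
  rewrite big_mkcond /= big_seq [RHS]big_seq; apply: eq_bigr => i it.
  have gu : g i \in u by rewrite mem_undup map_f.
  rewrite (big_rem (g i) gu) eqxx andbT big1_seq; first by symmetry; exact: addr0.
  move=> j /andP[/andP[_ /eqP e] jr].
  by move: jr; rewrite -e (mem_rem_uniqF _ (undup_uniq _)).
rewrite (exchange_big_dep P) //=; last by move=> i j _ /andP[].
apply: eq_bigr => j Pj; apply: eq_bigl => i; by rewrite Pj.
Qed.

Section Final.
Variables (k : fieldType) (n : nat) (r : 'I_n -> nat).

Local Notation M := (boxM r).
Local Notation B := (box r).
Local Notation K := #|{: 'I_n * 'I_M}|.
Local Notation Y := {mpoly k[K]}.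
Local Notation N := #|B|.
Local Notation inJ := (ideal_gen (@gens_J k n r)).

Definition pts (m : 'X_{1..N}) : seq B :=
  flatten [seq nseq (m i) (enum_val i) | i <- enum 'I_N].

Lemma prod_nseq (R : comNzRingType) (c : nat) (a : B) (F : B -> R) :
  \prod_(p <- nseq c a) F p = F a ^+ c.
Proof. by elim: c => [|c IH]; rewrite ?big_nil ?expr0 // big_cons IH exprS. Qed.

Lemma XP_pts m : XP k (pts m) = 'X_[m].
Proof.
rewrite /XP /pts big_flatten /= big_map mpolyXE_id -[RHS]big_enum /=.
apply: eq_bigr => i _; by rewrite prod_nseq /xA enum_valK.
Qed.

Definition sigS (P : seq B) : 'X_{1..K} := \big[+%MM/0%MM]_(p <- P) sigp p.

Lemma phi_XP P : phi (XP k P) = 'X_[sigS P].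
Proof.
elim: P => [|p P IH]; first by rewrite /XP /sigS !big_nil phi1 mpolyX0.
by rewrite /XP /sigS !big_cons phiM phi_xA mpolyXD -IH.
Qed.

Lemma sigS_E P l v : sigS P (yv l v) = count (fun p => crd l p == v) P.
Proof.
elim: P => [|p P IH]; first by rewrite /sigS big_nil mnm0E.
by rewrite /sigS big_cons mnmDE -/(sigS P) IH sigpE.
Qed.

Lemma sigS_marg P Q : sigS P = sigS Q -> marg P Q.
Proof.
move=> h l; apply/allP => x _; apply/eqP; rewrite !count_map.
by have := congr1 (fun s : 'X_{1..K} => s (yv l x)) h; rewrite !sigS_E.
Qed.

Definition sigm m := sigS (pts m).

Lemma phi_coef (f : polyA k r) s :
  (phi f)@_s = \sum_(m <- msupp f | sigm m == s) f@_m.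
Proof.
rewrite /phi /mmap (raddf_sum (mcoeff s)) /= [RHS]big_mkcond /=; apply: eq_bigr => m _.
have -> : mmap1 (hY k (r:=r)) m = 'X_[sigm m].
  have -> : mmap1 (hY k (r:=r)) m = phi ('X_[m] : polyA k r) by rewrite /phi mmapX.
  by rewrite -XP_pts phi_XP.
by rewrite mcoeffCM mcoeffX; case: eqP; rewrite ?mulr1 ?mulr0.
Qed.

End Final.

Lemma ig_sum_seq (R : comNzRingType) (S : R -> Prop) (I : eqType) (s : seq I) (P : pred I) (F : I -> R) :
  (forall i, i \in s -> P i -> ideal_gen S (F i)) -> ideal_gen S (\sum_(i <- s | P i) F i).
Proof.
elim: s => [|i s IH] H; first by rewrite big_nil; apply: ig0.
rewrite big_cons; case: ifP => Pi.
  apply: igD; first by apply: H; rewrite ?mem_head.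
  by apply: IH => j js; apply: H; rewrite inE js orbT.
by apply: IH => j js; apply: H; rewrite inE js orbT.
Qed.

Section Main.
Variables (k : fieldType) (n : nat) (r : 'I_n -> nat).

Local Notation M := (boxM r).
Local Notation B := (box r).
Local Notation K := #|{: 'I_n * 'I_M}|.
Local Notation N := #|B|.
Local Notation inJ := (ideal_gen (@gens_J k n r)).
Local Notation inI l := (ideal_gen (@gens_I k n r l)).

Lemma corner_lt (hr : forall j, (0 < r j)%N) l : ((r l).-1 < M)%N.
Proof.
apply: (@leq_trans (r l)); first by rewrite ltn_predL.
exact: (@leq_bigmax _ (fun j => r j) l).
Qed.

Definition cornerF hr : {ffun 'I_n -> 'I_M} := [ffun l => Ordinal (corner_lt hr l)].

Lemma cornerP hr : [forall j, (cornerF hr j < r j)%N].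
Proof. by apply/forallP => j; rewrite ffunE /= ltn_predL. Qed.

Definition corner hr : B := Sub (cornerF hr) (cornerP hr).

Lemma crd_corner hr l : (crd l (corner hr) : nat) = (r l).-1.
Proof. by rewrite /crd /corner SubK ffunE. Qed.

Lemma full_in_J hr (l0 : 'I_n) m :
  (forall l, 0 < sigm m (yv l (crd l (corner hr))))%N -> inJ ('X_[m] : polyA k r).
Proof.
move=> hf; set c := corner hr; set P := pts m.
have hq : forall l, crd l c \in map (crd l) P.
  move=> l; have := hf l; rewrite /sigm sigS_E -has_count => /hasP[p pP /eqP e].
  by rewrite -e map_f.
have hP : P != [::] by have := hq l0; case: (P).
have [P' [hm hJ hcP]] := gather k hP hq.
have -> : ('X_[m] : polyA k r) = (XP k P - XP k P') + xA k c * XP k (rem c P').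
  by rewrite -XP_pts -/P (XP_perm k (perm_to_rem hcP)) /XP big_cons subrK.
apply: igD => //; apply: igMr; apply: ig_gen; right; exists c; split => // j.
by rewrite coordE crd_corner.
Qed.

Definition full (hr : forall j, (0 < r j)%N) (s : 'X_{1..K}) := [forall l, 0 < s (yv l (crd l (corner hr)))]%N.

Lemma hard (hr : forall j, (0 < r j)%N) (l0 : 'I_n) (f : polyA k r) : (forall l, inI l f) -> inJ f.
Proof.
move=> hI; set t := msupp f.
pose rep (s : 'X_{1..K}) := head 0%MM [seq m' <- t | sigm m' == s].
have reps m : m \in t -> sigm (rep (sigm m)) = sigm m.
  move=> mt; have : rep (sigm m) \in [seq m' <- t | sigm m' == sigm m].
    rewrite /rep; case E: [seq m' <- t | sigm m' == sigm m] => [|x xs]; last by rewrite mem_head.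
    have : m \in [seq m' <- t | sigm m' == sigm m] by rewrite mem_filter eqxx mt.
    by rewrite E.
  by rewrite mem_filter => /andP[/eqP].
rewrite (mpolyE f) -/t.
rewrite (eq_bigr (fun m => f@_m *: ('X_[m] - 'X_[rep (sigm m)]) + f@_m *: 'X_[rep (sigm m)]));
  last by move=> m _; rewrite -scalerDr subrK.
rewrite big_split /= [X in _ + X](bigID (fun m => full hr (sigm m))) /=.
apply: igD; [|apply: igD].
- apply: ig_sum_seq => m mt _; rewrite -mul_mpolyC; apply: igMl.
  rewrite -!XP_pts; apply: (comb_main k l0); apply: sigS_marg.
  by have := reps m mt.
- apply: ig_sum_seq => m mt hf; rewrite -mul_mpolyC; apply: igMl.
  apply: (full_in_J l0) => l; rewrite reps //.
  by move/forallP: hf; apply.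
- rewrite (regroup t (@sigm n r) (fun s => ~~ full hr s)) big1 //; first by apply: ig0.
  move=> s ns.
  rewrite (eq_bigr (fun m => f@_m *: 'X_[rep s])); last by move=> m /eqP ->.
  rewrite -scaler_suml -phi_coef.
  move: ns; rewrite negb_forall => /existsP[l]; rewrite -eqn0Ngt => /eqP hs.
  rewrite (coef_vanish (hI l)) ?scale0r // => v hv.
  suff -> : v = crd l (corner hr) by [].
  by apply: val_inj; rewrite /= hv -crd_corner.
Qed.

End Main.

Theorem corollary1p1p1 (k : fieldType) (n : nat) (r : 'I_n -> nat) :
  (2 <= n)%N -> (forall j, (0 < r j)%N) ->
  forall f : polyA k r,
    (forall l : 'I_n, ideal_gen (@gens_I k n r l) f) <-> ideal_gen (@gens_J k n r) f.
Proof.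
move=> hn hr f; split.
  move=> h; have n0 : (0 < n)%N by apply: leq_trans hn.
  exact: (hard hr (Ordinal n0) h).
by move=> h l; apply: J_sub_I.
Qed.
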